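(* Let $M=(M_{ij})$ be an $n\times n$ matrix (over a commutative ring) with $M_{ij}=0$ whenever $i+j\notin\{n+1,n+2\}$. Then $$\det(t-M)=\sum_{k=0}^n t^{n-k}(-1)^{\frac{k(k+1)}{2}}\sum_{(A,B)}\prod_{(i,j)\in A\cup B}M_{ij},$$ where the inner sum runs over pairs $(A,B)$ with $A\subset\{(i,j):i+j=n+1\}$, $B\subset\{(i,j):i+j=n+2\}$ (indices in $\{1,\dots,n\}$) such that: (1) $A$ and $B$ are both invariant under $(i,j)\mapsto(j,i)$; (2) the sets $\{i:(i,j)\in A\}$ and $\{i:(i,j)\in B\}$ are disjoint, and likewise $\{j:(i,j)\in A\}$ and $\{j:(i,j)\in B\}$ are disjoint; (3) $|A|+|B|=k$. *)

(* Defs.v *)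
From mathcomp Require Import all_boot all_order all_algebra.
Set Implicit Arguments. Unset Strict Implicit. Unset Printing Implicit Defensive.
Import GRing.Theory.
Local Open Scope ring_scope.

(* Indices are 0-based ordinals 'I_n; the paper's 1-based index i corresponds
   to the ordinal with value i-1, so the paper's condition i + j = n + 1
   becomes (i0 + 1) + (j0 + 1) = n + 1. *)

Definition admissible_pair (n k : nat) (A B : {set 'I_n * 'I_n}) : bool :=
  [&& [forall p in A, (p.1 + 1 + (p.2 + 1) == n + 1)%N],
      [forall p in B, (p.1 + 1 + (p.2 + 1) == n + 2)%N],
      [forall p in A, (p.2, p.1) \in A],
      [forall p in B, (p.2, p.1) \in B],
      [disjoint [set p.1 | p in A] & [set p.1 | p in B]],
      [disjoint [set p.2 | p in A] & [set p.2 | p in B]] &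
      (#|A| + #|B| == k)%N].

(* Main.v *)
Require Import Defs.
From mathcomp Require Import all_boot all_order all_algebra all_fingroup.
From mathcomp Require Import zify.
Set Implicit Arguments. Unset Strict Implicit. Unset Printing Implicit Defensive.
Import GRing.Theory.
Local Open Scope ring_scope.

Lemma halfE k : ((k * k.+1)./2 = (k.-1 * k)./2 + k)%N.
Proof.
case: k => [//|m].
rewrite [m.+1.-1]/=.
have -> : (m.+1 * m.+2 = m * m.+1 + (m.+1).*2)%N by rewrite -muln2; lia.
by rewrite halfD odd_double andbF add0n doubleK.
Qed.
Lemma halfS2 m : odd ((m.+1 * m.+2)./2)%N = ~~ odd ((m.-1 * m)./2)%N.
Proof. rewrite halfE halfE -addnA oddD (oddD m) /= addbN addbb. by case: odd. Qed.

Definition fixout n (S : {set 'I_n}) (s : 'S_n) :=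
  [forall i, (i \notin S) ==> (s i == i)].
Definition good n (S : {set 'I_n}) (s : 'S_n) :=
  [forall i in S, (i + 1 + (s i + 1) == n + 1)%N || (i + 1 + (s i + 1) == n + 2)%N].

Lemma fixoutP n S s i : @fixout n S s -> i \notin S -> s i = i.
Proof. by move=> /forallP /(_ i) /implyP H /H /eqP. Qed.

Lemma goodP n S s i : @good n S s -> i \in S ->
  (i + 1 + (s i + 1) = n + 1)%N \/ (i + 1 + (s i + 1) = n + 2)%N.
Proof. by move=> /forall_inP H /H /orP [] /eqP; [left|right]. Qed.

Lemma mapsto n S s x : @fixout n S s -> x \in S -> s x \in S.
Proof.
move=> fs xS; apply/negPn/negP => sxS.
have := fixoutP fs sxS => /perm_inj sx; by rewrite sx xS in sxS.
Qed.

Lemma mono n S s i j : @good n S s -> i \in S -> j \in S -> (i < j)%N -> (s j < s i)%N.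
Proof.
move=> gs iS jS ij.
have ne : s j != s i.
  by apply/negP => /eqP /perm_inj ji; move: ij; rewrite ji ltnn.
have := goodP gs iS; have := goodP gs jS.
move: ne; rewrite -val_eqE /=.
move=> /eqP ne; lia.
Qed.

Lemma small n (S : {set 'I_n}) (s : 'S_n) : (#|S| <= 1)%N -> fixout S s -> s = 1%g.
Proof.
move=> hS fs; apply/permP => i; rewrite perm1.
case: (boolP (i \in S)) => iS; last exact: fixoutP fs iS.
apply/eqP/negPn/negP => ne.
have : [set i; s i] \subset S.
  by apply/subsetP => j; rewrite !inE => /orP [] /eqP ->; [|apply: mapsto].
move/subset_leq_card; rewrite cards2 eq_sym ne; lia.
Qed.

Lemma rev_spec n k : forall (S : {set 'I_n}) (s : 'S_n), (#|S| <= k)%N ->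
  fixout S s -> good S s ->
  (forall i, s (s i) = i) /\ odd_perm s = odd ((#|S|.-1 * #|S|)./2).
Proof.
elim: k => [|k IH] S s hk fs gs.
  have -> := small (leq_trans hk (leq0n 1)) fs.
  by split => [i|]; rewrite ?perm1 // odd_perm1; move: hk; rewrite leqn0 => /eqP ->.
case: (leqP #|S| 1) => h1.
  have -> := small h1 fs.
  split => [i|]; rewrite ?perm1 // odd_perm1.
  by move: h1; case: #|S| => [|[|]].
have [x xS] : exists x, x \in S by apply/card_gt0P; lia.
case: (arg_minnP (fun i : 'I_n => val i) xS) => a aS amin.
case: (arg_maxnP (fun i : 'I_n => val i) xS) => b bS bmax.
have ab : a != b.
  apply/negP => /eqP ab.
  have : S \subset [set a].
    apply/subsetP => j jS; rewrite in_set1; apply/eqP/val_inj.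
    have := amin j jS; have := bmax j jS; rewrite -ab /=; lia.
  by move/subset_leq_card; rewrite cards1; lia.
have ltab : (a < b)%N.
  have := bmax a aS; rewrite /=; move: ab; rewrite -val_eqE /= => /eqP; lia.
have sinS : forall y, s y \in S -> y \in S.
  move=> y syS; apply/negPn/negP => yS.
  by move: syS; rewrite (fixoutP fs yS) (negbTE yS).
have sa : s a = b.
  apply/eqP/negPn/negP => ne.
  set c := (s^-1)%g b.
  have sc : s c = b by rewrite /c permKV.
  have cS : c \in S by apply: sinS; rewrite sc.
  have ca : c != a by apply/negP => /eqP ca; rewrite -sc ca eqxx in ne.
  have ac : (a < c)%N.
    have := amin c cS; rewrite /=; move: ca; rewrite -val_eqE /= => /eqP; lia.
  have := mono gs aS cS ac; rewrite sc.
  have := bmax (s a) (mapsto fs aS); rewrite /=; lia.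
have sb : s b = a.
  apply/eqP/negPn/negP => ne.
  set c := (s^-1)%g a.
  have sc : s c = a by rewrite /c permKV.
  have cS : c \in S by apply: sinS; rewrite sc.
  have ca : c != b by apply/negP => /eqP ca; rewrite -sc ca eqxx in ne.
  have ac : (c < b)%N.
    have := bmax c cS; rewrite /=; move: ca; rewrite -val_eqE /= => /eqP; lia.
  have := mono gs cS bS ac; rewrite sc.
  have := amin (s b) (mapsto fs bS); rewrite /=; lia.
set S' := S :\ a :\ b.
have cS : #|S| = #|S'|.+2.
  rewrite (cardsD1 a S) (_ : a \in S = true) // (cardsD1 b (S :\ a)) !inE eq_sym ab (_ : b \in S = true) //.
set s' := (s * tperm a b)%g.
have s'E : forall y, s' y = tperm a b (s y) by move=> y; rewrite permM.
have sneq : forall y, y != a -> y != b -> (s y != a) && (s y != b).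
  move=> y ya yb; apply/andP; split; apply/negP => /eqP e.
    by move: yb; rewrite -sb in e; rewrite (perm_inj e) eqxx.
  by move: ya; rewrite -sa in e; rewrite (perm_inj e) eqxx.
have fs' : fixout S' s'.
  apply/forallP => y; apply/implyP => yS'; rewrite s'E.
  case: (eqVneq y a) => [->|ya]; first by rewrite sa tpermR.
  case: (eqVneq y b) => [->|yb]; first by rewrite sb tpermL.
  have yS : y \notin S by move: yS'; rewrite !inE ya yb.
  by rewrite (fixoutP fs yS) tpermD // eq_sym.
have gs' : good S' s'.
  apply/forall_inP => y; rewrite !inE => /and3P [yb ya yS].
  rewrite s'E; case/andP: (sneq y ya yb) => h1' h2'.
  rewrite tpermD; [|by rewrite eq_sym|by rewrite eq_sym]; by move: gs => /forall_inP /(_ y yS).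
have [inv' odd'] := IH S' s' ltac:(lia) fs' gs'.
have ss : s = (s' * tperm a b)%g by rewrite /s' -mulgA tperm2 mulg1.
split.
  move=> i.
  case: (eqVneq i a) => [->|ia]; first by rewrite sa sb.
  case: (eqVneq i b) => [->|ib]; first by rewrite sb sa.
  case/andP: (sneq i ia ib) => h1' h2'.
  case/andP: (sneq (s i) h1' h2') => h3 h4.
  have e1 : s' i = s i by rewrite s'E tpermD // eq_sym.
  have e2 : s' (s i) = s (s i) by rewrite s'E tpermD // eq_sym.
  by rewrite -e2 -{1}e1 inv'.
rewrite ss odd_permM odd_tperm ab odd' cS halfS2.
by case: odd.
Qed.

Definition gA n (S : {set 'I_n}) (s : 'S_n) : {set 'I_n * 'I_n} :=
  [set p | (p.1 \in S) && (s p.1 == p.2) && (p.1 + 1 + (p.2 + 1) == n + 1)%N].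
Definition gB n (S : {set 'I_n}) (s : 'S_n) : {set 'I_n * 'I_n} :=
  [set p | (p.1 \in S) && (s p.1 == p.2) && (p.1 + 1 + (p.2 + 1) == n + 2)%N].
Definition rows n (AB : {set 'I_n * 'I_n} * {set 'I_n * 'I_n}) : {set 'I_n} :=
  [set p.1 | p in AB.1 :|: AB.2].

Lemma gU n S s : @good n S s -> gA S s :|: gB S s = [set (i, s i) | i in S].
Proof.
move=> gs; apply/setP => [[i j]]; rewrite !inE /=.
apply/idP/imsetP.
  by case/orP => /andP [/andP [iS /eqP <-] _]; exists i.
move=> [k kS [-> ->]]; rewrite kS eqxx /=.
by case: (goodP gs kS) => ->; rewrite eqxx ?orbT.
Qed.

Lemma gr_prod (R : comRingType) n (M : 'M[R]_n) S s : @good n S s ->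
  \prod_(p in gA S s :|: gB S s) M p.1 p.2 = \prod_(i in S) M i (s i).
Proof.
move=> gs; rewrite gU // big_imset //.
by move=> i j _ _ [].
Qed.

Lemma gr_adm n S s : @fixout n S s -> good S s ->
  admissible_pair #|S| (gA S s) (gB S s) && (rows (gA S s, gB S s) == S).
Proof.
move=> fs gs.
have [inv _] := rev_spec (leqnn #|S|) fs gs.
have h1 : [forall p in gA S s, (p.1 + 1 + (p.2 + 1) == n + 1)%N].
  by apply/forall_inP => p; rewrite inE => /andP [].
have h2 : [forall p in gB S s, (p.1 + 1 + (p.2 + 1) == n + 2)%N].
  by apply/forall_inP => p; rewrite inE => /andP [].
have h3 : [forall p in gA S s, (p.2, p.1) \in gA S s].
  apply/forall_inP => -[i j]; rewrite !inE /= => /andP [/andP [iS /eqP e] h].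
  rewrite -e inv mapsto // eqxx /=; move: h; rewrite -e => /eqP h; apply/eqP; lia.
have h4 : [forall p in gB S s, (p.2, p.1) \in gB S s].
  apply/forall_inP => -[i j]; rewrite !inE /= => /andP [/andP [iS /eqP e] h].
  rewrite -e inv mapsto // eqxx /=; move: h; rewrite -e => /eqP h; apply/eqP; lia.
have h5 : [disjoint [set p.1 | p in gA S s] & [set p.1 | p in gB S s]].
  rewrite -setI_eq0; apply/negPn/negP => /set0Pn [x /setIP [/imsetP [[i j] + ->] /imsetP [[i' j'] + /= e]]].
  rewrite !inE /= => /andP [/andP [_ /eqP e1] h] /andP [/andP [_ /eqP e2] h'].
  move: h h'; rewrite -e1 -e2 -e /=; move=> /eqP -> /eqP; lia.
have h6 : [disjoint [set p.2 | p in gA S s] & [set p.2 | p in gB S s]].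
  rewrite -setI_eq0; apply/negPn/negP => /set0Pn [x /setIP [/imsetP [[i j] + ->] /imsetP [[i' j'] + /= e]]].
  rewrite !inE /= => /andP [/andP [_ /eqP e1] h] /andP [/andP [_ /eqP e2] h'].
  move: e1 e2; rewrite e /= => e1; rewrite -e1 => /perm_inj e2.
  move: h h'; rewrite -e2 -e /=; move=> /eqP -> /eqP; lia.
have h7 : (#|gA S s| + #|gB S s| == #|S|)%N.
  have : #|gA S s :&: gB S s| = 0%N.
    apply/eqP; rewrite cards_eq0; apply/eqP/setP => -[i j]; rewrite !inE /=.
    apply/negP => /andP [/andP [_ /eqP h] /andP [_ /eqP h']]; lia.
  have := cardsU (gA S s) (gB S s); rewrite gU // card_in_imset; last by move=> ? ? _ _ [].
  lia.
have h8 : rows (gA S s, gB S s) == S.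
  rewrite /rows /= gU //; apply/eqP/setP => x; apply/imsetP/idP.
    by move=> [p /imsetP [i iS ->] ->].
  by move=> xS; exists (x, s x) => //; apply/imsetP; exists x.
by rewrite /admissible_pair h1 h2 h3 h4 h5 h6 h7 h8.
Qed.

Lemma gr_surj n k (S : {set 'I_n}) (A B : {set 'I_n * 'I_n}) :
  admissible_pair k A B -> rows (A, B) == S ->
  exists s : 'S_n, [&& fixout S s, good S s, gA S s == A & gB S s == B].
Proof.
case/and5P => h1 h2 h3 h4 /and3P [h5 h6 _] /eqP hS.
have uq : forall i j j', (i, j) \in A :|: B -> (i, j') \in A :|: B -> j = j'.
  move=> i j j'; rewrite !inE => /orP [hA|hB] /orP [hA'|hB'].
  - move: h1 => /forall_inP h1; have := h1 _ hA; have := h1 _ hA'.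
    by move=> /= /eqP ? /eqP ?; apply: val_inj => /=; lia.
  - have : i \in [set p.1 | p in A] :&: [set p.1 | p in B].
      by rewrite inE; apply/andP; split; apply/imsetP; [exists (i, j)|exists (i, j')].
    by rewrite (disjoint_setI0 h5) inE.
  - have : i \in [set p.1 | p in A] :&: [set p.1 | p in B].
      by rewrite inE; apply/andP; split; apply/imsetP; [exists (i, j')|exists (i, j)].
    by rewrite (disjoint_setI0 h5) inE.
  - move: h2 => /forall_inP h2; have := h2 _ hB; have := h2 _ hB'.
    by move=> /= /eqP ? /eqP ?; apply: val_inj => /=; lia.
have sy : forall i j, (i, j) \in A :|: B -> (j, i) \in A :|: B.
  move=> i j; rewrite !inE => /orP [hA|hB].
    by move: h3 => /forall_inP /(_ _ hA) ->.
  by move: h4 => /forall_inP /(_ _ hB) ->; rewrite orbT.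
have inS : forall i j, (i, j) \in A :|: B -> i \in S.
  by move=> i j h; rewrite -hS; apply/imsetP; exists (i, j).
have Sin : forall i, i \in S -> exists j, (i, j) \in A :|: B.
  by move=> i; rewrite -hS => /imsetP [[i' j] h ->]; exists j.
pose f i := if [pick j | (i, j) \in A :|: B] is Some j then j else i.
have fP : forall i j, (i, j) \in A :|: B -> f i = j.
  move=> i j h; rewrite /f; case: pickP => [j' h'|h'].
    exact: uq h' h.
  by have := h' j; rewrite h.
have fout : forall i, i \notin S -> f i = i.
  move=> i iS; rewrite /f; case: pickP => [j' h'|//].
  by rewrite (inS _ _ h') in iS.
have finj : injective f.
  move=> x y.
  case: (boolP (x \in S)) => xS; case: (boolP (y \in S)) => yS.
  - have [jx hx] := Sin x xS; have [jy hy] := Sin y yS.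
    rewrite (fP _ _ hx) (fP _ _ hy) => e; rewrite e in hx.
    exact: uq (sy _ _ hx) (sy _ _ hy).
  - have [jx hx] := Sin x xS.
    rewrite (fP _ _ hx) (fout _ yS) => e; rewrite e in hx.
    by rewrite (inS _ _ (sy _ _ hx)) in yS.
  - have [jy hy] := Sin y yS.
    rewrite (fP _ _ hy) (fout _ xS) => e; rewrite -e in hy.
    by rewrite (inS _ _ (sy _ _ hy)) in xS.
  - by rewrite (fout _ xS) (fout _ yS).
exists (perm finj).
have fS : forall i, i \in S -> (i, f i) \in A :|: B.
  by move=> i /Sin [j h]; rewrite (fP _ _ h).
apply/and4P; split.
- by apply/forallP => i; apply/implyP => iS; rewrite permE fout.
- apply/forall_inP => i iS; rewrite permE.
  have := fS i iS; rewrite inE => /orP [hA|hB].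
    by move: h1 => /forall_inP /(_ _ hA) ->.
  by move: h2 => /forall_inP /(_ _ hB) ->; rewrite orbT.
- apply/eqP/setP => -[i j]; rewrite !inE permE /=.
  apply/idP/idP.
    move=> /andP [/andP [iS /eqP e] hs].
    have := fS i iS; rewrite e inE => /orP [//|hB].
    by move: h2 => /forall_inP /(_ _ hB) /= /eqP; move: hs => /eqP; lia.
  move=> hA; have hAB : (i, j) \in A :|: B by rewrite inE hA.
  rewrite (inS _ _ hAB) (fP _ _ hAB) eqxx /=.
  by move: h1 => /forall_inP /(_ _ hA).
- apply/eqP/setP => -[i j]; rewrite !inE permE /=.
  apply/idP/idP.
    move=> /andP [/andP [iS /eqP e] hs].
    have := fS i iS; rewrite e inE => /orP [hA|//].
    by move: h1 => /forall_inP /(_ _ hA) /= /eqP; move: hs => /eqP; lia.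
  move=> hB; have hAB : (i, j) \in A :|: B by rewrite inE hB orbT.
  rewrite (inS _ _ hAB) (fP _ _ hAB) eqxx /=.
  by move: h2 => /forall_inP /(_ _ hB).
Qed.

Lemma DS (R : comRingType) n (M : 'M[R]_n)
  (hM : forall i j : 'I_n,
     (i + 1 + (j + 1) != n + 1)%N -> (i + 1 + (j + 1) != n + 2)%N -> M i j = 0)
  (S : {set 'I_n}) :
  \sum_(s : 'S_n | fixout S s) (-1) ^+ s * \prod_(i in S) M i (s i) =
  (-1) ^+ ((#|S|.-1 * #|S|)./2) *
  \sum_(AB : {set 'I_n * 'I_n} * {set 'I_n * 'I_n} |
        admissible_pair #|S| AB.1 AB.2 && (rows AB == S))
     \prod_(p in AB.1 :|: AB.2) M p.1 p.2.
Proof.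
rewrite (bigID (good S)) /=.
rewrite [X in _ + X]big1 ?addr0; last first.
  move=> s /andP [_ ng].
  move: ng; rewrite negb_forall_in => /exists_inP [i iS h].
  rewrite (bigD1 i) //= hM ?mul0r ?mulr0 //.
    by apply/negP => e; rewrite e in h.
  by apply/negP => e; rewrite e orbT in h.
pose gr (s : 'S_n) := (gA S s, gB S s).
pose P := [set s : 'S_n | fixout S s && good S s].
transitivity (\sum_(s in P) (-1) ^+ ((#|S|.-1 * #|S|)./2) *
                 \prod_(p in (gr s).1 :|: (gr s).2) M p.1 p.2).
  apply: eq_big => [s|s]; first by rewrite inE.
  move=> /andP [fs gs]; have [_ ->] := rev_spec (leqnn #|S|) fs gs.
  by rewrite /= gr_prod // signr_odd.
rewrite mulr_sumr -(big_imset (fun AB => (-1) ^+ ((#|S|.-1 * #|S|)./2) *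
                 \prod_(p in AB.1 :|: AB.2) M p.1 p.2)); last first.
  move=> s t; rewrite !inE => /andP [fs gs] /andP [ft gt] e.
  have : [set (i, s i) | i in S] = [set (i, t i) | i in S].
    by rewrite -gU // -gU //; case: e => -> ->.
  move=> e2; apply/permP => i.
  case: (boolP (i \in S)) => iS; last by rewrite (fixoutP fs iS) (fixoutP ft iS).
  have : (i, s i) \in [set (i, t i) | i in S] by rewrite -e2; apply/imsetP; exists i.
  by case/imsetP => j _ [-> ->].
apply: eq_bigl => -[A B] /=.
apply/imsetP/idP.
  move=> [s]; rewrite inE => /andP [fs gs] [-> ->].
  exact: gr_adm.
move=> /andP [adm rS].
have [s /and4P [fs gs /eqP eA /eqP eB]] := gr_surj adm rS.
by exists s; [rewrite inE fs gs | rewrite /gr eA eB].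
Qed.

Lemma charE (R : comRingType) n (M : 'M[R]_n) :
  char_poly M = \sum_(J : {set 'I_n}) 'X^(n - #|J|) *
    ((-1) ^+ #|J| * \sum_(s : 'S_n | fixout J s) (-1) ^+ s * \prod_(i in J) M i (s i))%:P.
Proof.
rewrite /char_poly /determinant.
transitivity (\sum_(s : 'S_n) \sum_(J : {set 'I_n}) (-1) ^+ s *
   ((-1) ^+ #|J| * (\prod_(i in J) M i (s i))%:P *
    (if fixout J s then 'X^(n - #|J|) else 0))).
  apply: eq_bigr => s _; rewrite -mulr_sumr; congr (_ * _).
  rewrite (eq_bigr (fun i => - (M i (s i))%:P + 'X *+ (i == s i))); last first.
    by move=> i _; rewrite !mxE addrC.
  rewrite bigA_distr; apply: eq_bigr => J _.
  rewrite (bigID (mem J)) /=.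
  rewrite (eq_bigr (fun i => - (M i (s i))%:P)); last by move=> i ->.
  rewrite [X in _ * X](eq_bigr (fun i => 'X *+ (i == s i))); last by move=> i /negbTE ->.
  rewrite prodrN rmorph_prod /=; congr (_ * _).
  case: ifP => fs.
    rewrite (eq_bigr (fun _ => 'X)); last first.
      by move=> i iJ; rewrite (fixoutP fs iJ) eqxx mulr1n.
    rewrite prodr_const; congr (_ ^+ _).
    have -> : (n - #|J|)%N = #|~: J| by rewrite -{1}(card_ord n) -(cardsC J) addKn.
    by apply: eq_card => i; rewrite !inE.
  move: fs => /negbT; rewrite negb_forall => /existsP [i]; rewrite negb_imply => /andP [iJ ne].
  have ne' : (i == s i) = false by apply/negbTE; rewrite eq_sym.
  by rewrite (bigD1 i) //= ne' mulr0n mul0r.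
rewrite exchange_big; apply: eq_bigr => J _.
rewrite (bigID (fixout J)) /= [X in _ + X]big1 ?addr0; last first.
  by move=> s /negbTE ->; rewrite !mulr0.
rewrite rmorphM rmorph_sum /= !mulr_sumr; apply: eq_bigr => s fs.
rewrite fs rmorphM /= !rmorph_sign.
by rewrite [RHS]mulrC !mulrA [(-1) ^+ s * _]mulrC.

Qed.

Lemma rows_card n k (A B : {set 'I_n * 'I_n}) :
  admissible_pair k A B -> #|rows (A, B)| = k.
Proof.
case/and5P => h1 h2 _ _ /and3P [h5 _ /eqP h7].
rewrite /rows /= imsetU cardsU (disjoint_setI0 h5) cards0 subn0.
rewrite !card_in_imset // -?h7 // => -[i j] [i' j'] hp hq /= e; congr (_, _) => //.
  move: e hp hq; move: h2 => /forall_inP h2 -> /h2 /= /eqP + /h2 /= /eqP.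
  by move=> ? ?; apply: val_inj => /=; lia.
move: e hp hq; move: h1 => /forall_inP h1 -> /h1 /= /eqP + /h1 /= /eqP.
by move=> ? ?; apply: val_inj => /=; lia.
Qed.

Theorem mainTheorem13 (R : comRingType) (n : nat) (M : 'M[R]_n)
  (hM : forall i j : 'I_n,
     (i + 1 + (j + 1) != n + 1)%N -> (i + 1 + (j + 1) != n + 2)%N -> M i j = 0) :
  char_poly M =
  \sum_(k < n.+1)
     'X^(n - k) *
     ((-1) ^+ ((k * k.+1)./2) *
      \sum_(AB : {set 'I_n * 'I_n} * {set 'I_n * 'I_n} |
              admissible_pair k AB.1 AB.2)
         \prod_(p in AB.1 :|: AB.2) M p.1 p.2)%:P.
Proof.
rewrite charE (partition_big (fun J : {set 'I_n} => inord #|J| : 'I_n.+1) xpredT) //=.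
apply: eq_bigr => k _.
rewrite (partition_big (fun AB : {set 'I_n * 'I_n} * {set 'I_n * 'I_n} => rows AB)
           (fun J => #|J| == k)) /=; last first.
  by move=> [A B] /= /rows_card ->.
rewrite mulr_sumr rmorph_sum mulr_sumr.
apply: eq_big => [J|J].
  rewrite -val_eqE /= inordK //; apply: leq_ltn_trans (max_card _) _.
  by rewrite card_ord.
rewrite -val_eqE /= inordK; last by apply: leq_ltn_trans (max_card _) _; rewrite card_ord.
move=> /eqP hJ.
rewrite DS // hJ mulrA -exprD addnC -halfE.
by [].
Qed.
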